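(* Let $q$ be an odd prime power, $n=2^v$ with $v\ge1$, and $s$ an odd integer. There exists $t\in\mathbb{Z}_{2^v}$ with $qt\equiv t\pmod{2^v}$ such that Type-I duadic splittings of $\mathbb{Z}_{2^v}$ given by $\rho_{s,t}$ exist if and only if $\nu_2(q^j-s)+\nu_2(q-1)>v$ for all integers $j\ge0$.
   Context: $\mu_q:\mathbb{Z}_n\to\mathbb{Z}_n$, $i\mapsto qi\bmod n$; $P$ is $\mu_q$-invariant if $\mu_q(P)=P$. $\rho_{s,t}:\mathbb{Z}_n\to\mathbb{Z}_n$, $i\mapsto s(i+t)\bmod n$. Type-I duadic splittings of $\mathbb{Z}_n$ given by $\rho_{s,t}$ exist if there is a $\mu_q$-invariant $P$ with $\mathbb{Z}_n=P\cup\rho_{s,t}(P)$ a disjoint union. $\nu_2$ is the $2$-adic valuation, $\nu_2(0)=\infty$. *)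

(* Defs.v *)
From mathcomp Require Import all_boot all_order all_algebra.
Set Implicit Arguments. Unset Strict Implicit. Unset Printing Implicit Defensive.
Import GRing.Theory Num.Theory.
Local Open Scope ring_scope.

(* Z_n is modelled by 'Z_n; only used with n = 2^v, v >= 1, so n >= 2 and
   'Z_n is genuinely Z/nZ. *)

Definition mu {n : nat} (q : nat) (x : 'Z_n) : 'Z_n := q%:R * x.

Definition rho (n : nat) (s : int) (t x : 'Z_n) : 'Z_n := s%:~R * (x + t).

Definition mu_invariant {n : nat} (q : nat) (P : {set 'Z_n}) : Prop :=
  [set mu q x | x in P] = P.

Definition typeI_duadic_exists {n : nat} (q : nat) (s : int) (t : 'Z_n) : Prop :=
  exists P : {set 'Z_n},
    [/\ mu_invariant q P,
        P :|: [set rho s t x | x in P] = [set: 'Z_n]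
      & [disjoint P & [set rho s t x | x in P]]].

(* 2-adic valuation with nu2 0 = infinity (encoded as None) *)
Definition nu2 (a : int) : option nat :=
  if a == 0 then None else Some (logn 2 `|a|%N).

(* nu2 a + nu2 b > v, with infinity + _ = infinity > v *)
Definition nu2_sum_gt (a b : int) (v : nat) : Prop :=
  match nu2 a, nu2 b with
  | Some x, Some y => (v < x + y)%N
  | _, _ => True
  end.

(* Main.v *)
Require Import Defs.
From mathcomp Require Import all_boot all_order all_algebra.
Import GRing.Theory Num.Theory.
Local Open Scope ring_scope.

From mathcomp Require Import ring zify.
Set Implicit Arguments. Unset Strict Implicit.

Lemma intr_sign (R : comRingType) (z : int) : (z%:~R : R) = (-1)^+(z < 0)%R * (absz z)%:R.
Proof.
by rewrite {1}[z]intEsign rmorphM rmorphXn rmorphN1 /=.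
Qed.

Section Gen.
Variable N : nat.
Hypothesis N1 : (1 < N)%N.

Lemma unit_odd_int (z : int) (k : nat) : (N = 2 ^ k)%N -> odd (absz z) ->
  (z%:~R : 'Z_N) \is a GRing.unit.
Proof.
move=> NE oz; rewrite intr_sign unitrM unitrX ?unitrN1 //= unitZpE //.
have k0 : (0 < k)%N by case: k NE N1 => [->|].
by rewrite NE coprime_pexpl // coprime2n.
Qed.

Variable M : nat.
Hypothesis M1 : (1 < M)%N.
Hypothesis MN : (M %| N)%N.

Definition red (x : 'Z_N) : 'Z_M := (val x)%:R.

Lemma red_nat n : red (n%:R) = n%:R.
Proof.
apply: val_inj; rewrite /red /= !val_Zp_nat //.
by apply/eqP; rewrite modn_dvdm.
Qed.

Lemma redM x y : red (x * y) = red x * red y.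
Proof. by rewrite -[x]natr_Zp -[y]natr_Zp -natrM !red_nat natrM. Qed.

Lemma redD x y : red (x + y) = red x + red y.
Proof. by rewrite -[x]natr_Zp -[y]natr_Zp -natrD !red_nat natrD. Qed.

Lemma redN x : red (- x) = - red x.
Proof.
apply/eqP; rewrite -subr_eq0 opprK addrC -redD addrN.
by rewrite -(natr_Zp 0) red_nat.
Qed.

Lemma red_int (z : int) : red (z%:~R) = z%:~R.
Proof.
rewrite !intr_sign.
case: (z < 0)%R; rewrite ?expr1 ?expr0 ?mulN1r ?mul1r ?redN red_nat //.
Qed.

Lemma int_dvd_eq (z w : int) : (M%:Z %| z - w)%Z -> (z%:~R : 'Z_M) = w%:~R.
Proof.
move=> H; apply/eqP; rewrite -subr_eq0 -rmorphB /=.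
set u := z - w in H *.
rewrite intr_sign.
have -> : ((absz u)%:R : 'Z_M) = 0.
  apply: val_inj; rewrite /= val_Zp_nat //; apply/eqP; exact: H.
by rewrite mulr0.
Qed.

End Gen.

Lemma mu_mem N (P : {set 'Z_N}) q : (q%:R : 'Z_N) \is a GRing.unit ->
  mu_invariant q P -> forall y, (q%:R * y \in P) = (y \in P).
Proof.
move=> qu inv y; apply/idP/idP.
  by rewrite -{1}inv => /imsetP [z zP]; rewrite /mu => /(mulrI qu) ->.
by move=> yP; rewrite -inv; apply/imsetP; exists y.
Qed.

Lemma two_gt1 v : (0 < v)%N -> (1 < 2 ^ v)%N.
Proof. by case: v => // v _; rewrite expnS; have := expn_gt0 2 v; lia. Qed.

Lemma nu_dvd (z w : int) (v : nat) : w != 0 -> (2 %| absz z)%N -> nu2_sum_gt z w v ->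
  ((2 ^ (v - logn 2 `|w|%N).+1)%N%:Z %| z)%Z.
Proof.
move=> wn0 z2; rewrite /nu2_sum_gt /nu2 (negbTE wn0).
case: eqP => [->|/eqP zn0] H; first by rewrite dvdz0.
move: z2; rewrite -{1}(expn1 2).
rewrite /dvdz unfold_in /= !pfactor_dvdn // ?absz_gt0 //; lia.
Qed.

Lemma qm1E q : (0 < q)%N -> q%:Z - 1 = (q - 1)%N.
Proof. by move=> q0; rewrite subzn. Qed.

Lemma necessity q v (s : int) (t : 'Z_(2 ^ v)) : (1 < q)%N -> odd q -> (0 < v)%N ->
  odd (absz s) -> q%:R * t = t -> typeI_duadic_exists q s t ->
  forall j : nat, nu2_sum_gt (q%:Z ^+ j - s) (q%:Z - 1) v.
Proof.
move=> q1 oq v0 os qt [P [inv cov dis]] j.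
have N1 := two_gt1 v0.
have qu : (q%:R : 'Z_(2 ^ v)) \is a GRing.unit.
  by rewrite unitZpE // coprime_pexpl // coprime2n.
have su : (s%:~R : 'Z_(2 ^ v)) \is a GRing.unit by apply: (unit_odd_int N1 (k := v)).
rewrite /nu2_sum_gt /nu2 qm1E ?(ltnW q1) //.
have -> : ((q - 1)%N%:Z == 0) = false by apply/negbTE; rewrite eqz_nat; lia.
case: eqP => [_ //|/eqP dn0].
rewrite ltnNge; apply/negP => H.
have q0 : (0 < q - 1)%N by lia.
have [u cu qE] := pfactor_coprime (isT : prime 2) q0.
have dpos : (0 < `|q%:Z ^+ j - s|)%N by rewrite absz_gt0.
have [d' cd dE] := pfactor_coprime (isT : prime 2) dpos.
move: H; set e := logn 2 _; set a := logn 2 _ => H.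
have Ht : (2 ^ e %| val t)%N.
  have tlt : (val t < 2 ^ v)%N by rewrite -[X in (_ < X)%N]Zp_cast ?ltn_ord.
  have ht : val t = (val t %% 2 ^ v)%N by rewrite modn_small.
  have h1 : ((q * val t) %% 2 ^ v = val t %% 2 ^ v)%N.
    by rewrite -!(val_Zp_nat N1) natrM !natr_Zp qt.
  have h2 : (2 ^ v %| (q - 1) * val t)%N.
    by rewrite mulnBl mul1n -eqn_mod_dvd ?leq_pmull ?(ltnW q1) //; apply/eqP.
  have h3 : (2 ^ (v - a) %| val t)%N.
    move: h2; rewrite qE mulnAC; move: (val t) => tv.
    have : (2 ^ v = 2 ^ (v - a) * 2 ^ a)%N by rewrite -expnD subnK //; lia.
    move=> E; rewrite E dvdn_pmul2r ?expn_gt0 // Gauss_dvdr //.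
    by rewrite coprimeXl.
  apply: dvdn_trans h3; apply: dvdn_exp2l; lia.
set c : 'Z_(2 ^ v) := (-1) ^+ (q%:Z ^+ j - s < 0)%R * d'%:R.
have cU : c \is a GRing.unit.
  by rewrite unitrM unitrX ?unitrN1 //= unitZpE // coprime_pexpl.
have dR : ((q%:Z ^+ j - s)%:~R : 'Z_(2 ^ v)) = c * (2 ^ e)%:R.
  by rewrite intr_sign dE natrM mulrA.
set T : 'Z_(2 ^ v) := (val t %/ 2 ^ e)%:R.
have tE : t = (2 ^ e)%:R * T by rewrite -natrM mulnC divnK // natr_Zp.
set x := c^-1 * s%:~R * T.
have dx : (q%:Z ^+ j - s)%:~R * x = s%:~R * t.
  rewrite dR tE /x; transitivity ((c * c^-1) * ((2 ^ e)%:R * s%:~R * T)); first by ring.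
  by rewrite mulrV // mul1r; ring.
have dq : ((q%:Z ^+ j - s)%:~R : 'Z_(2 ^ v)) = (q%:R) ^+ j - s%:~R.
  by rewrite rmorphB rmorphXn /= -pmulrn.
have rx : rho s t x = (q%:R) ^+ j * x.
  by rewrite /rho mulrDr -dx dq; ring.
have muj : forall k y, ((q%:R) ^+ k * y \in P) = (y \in P).
  elim=> [|k IH] y; first by rewrite mul1r.
  by rewrite exprS -mulrA (mu_mem qu inv) IH.
have rhoinj : injective (rho s t) by move=> y z /(mulrI su) /addIr.
case xP : (x \in P).
  have : rho s t x \in [set rho s t x | x in P] by apply: imset_f.
  by rewrite (disjointFr dis) // rx (muj j) xP.
have : rho s t x \in P :|: [set rho s t x | x in P] by rewrite cov inE.
rewrite inE {1}rx (muj j) xP /= => /imsetP [z zP /rhoinj xz].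
by rewrite xz zP in xP.
Qed.

Lemma even_diff (x : nat) (s : int) : odd x -> odd (absz s) -> (2 %| absz (x%:Z - s))%N.
Proof.
move=> ox os.
have xE : x = (1 + 2 * x./2)%N by rewrite mul2n -{1}(odd_double_half x) ox.
have sE : absz s = (1 + 2 * (absz s)./2)%N by rewrite mul2n -{1}(odd_double_half (absz s)) os.
set m := (absz s)./2 in sE; set n := x./2 in xE.
have : ((2 : int) %| x%:Z - s)%Z; last by [].
rewrite [s]intEsign sE xE; case: (s < 0)%R; apply/dvdzP.
  by exists (n%:Z + m%:Z + 1); rewrite !PoszD /=; ring.
by exists (n%:Z - m%:Z); rewrite !PoszD /=; ring.
Qed.

Lemma sufficiency q v (s : int) : (1 < q)%N -> odd q -> (0 < v)%N ->
  odd (absz s) -> (forall j : nat, nu2_sum_gt (q%:Z ^+ j - s) (q%:Z - 1) v) ->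
  exists t : 'Z_(2 ^ v), q%:R * t = t /\ typeI_duadic_exists q s t.
Proof.
move=> q1 oq v0 os H.
have N1 := two_gt1 v0.
have q0 : (0 < q - 1)%N by lia.
have [u cu qE] := pfactor_coprime (isT : prime 2) q0.
move: qE; set a := logn 2 (q - 1) => qE.
have a1 : (1 <= a)%N.
  rewrite -(pfactor_dvdn 1 (isT : prime 2) q0) expn1 dvdn2 oddB ?(ltnW q1) //.
  by rewrite oq.
set b := (v - a)%N.
set M := (2 ^ b.+1)%N.
have M1 : (1 < M)%N by apply: two_gt1.
have MN : (M %| 2 ^ v)%N by apply: dvdn_exp2l; lia.
have wn0 : q%:Z - 1 != 0 by rewrite qm1E ?(ltnW q1) // eqz_nat; lia.
have absw : `|q%:Z - 1|%N = (q - 1)%N by rewrite qm1E ?(ltnW q1).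
have Hd : forall j, (M%:Z %| q%:Z ^+ j - s)%Z.
  move=> j; have := nu_dvd wn0 _ (H j); rewrite absw; apply.
  by rewrite -rmorphXn /= even_diff // oddX orbC oq.
have sZ : (s%:~R : 'Z_M) = 1.
  rewrite (int_dvd_eq M1 (z := s) (w := 1)) ?mulr1z //.
  by rewrite dvdzE -(abszN (s - 1)) opprB -dvdzE; have := Hd 0%N; rewrite expr0.
have qZ : (q%:R : 'Z_M) = 1.
  rewrite pmulrn (int_dvd_eq M1 (z := q%:Z) (w := s)) ?sZ //.
  by have := Hd 1%N; rewrite expr1.
have qu : (q%:R : 'Z_(2 ^ v)) \is a GRing.unit.
  by rewrite unitZpE // coprime_pexpl // coprime2n.
have su : (s%:~R : 'Z_(2 ^ v)) \is a GRing.unit by apply: (unit_odd_int N1 (k := v)).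
pose t : 'Z_(2 ^ v) := (2 ^ b)%:R.
have qt : q%:R * t = t.
  rewrite -natrM; apply: val_inj; rewrite /= !val_Zp_nat //; apply/eqP.
  rewrite eqn_mod_dvd ?leq_pmull ?(ltnW q1) // -{2}(mul1n (2 ^ b)%N) -mulnBl qE.
  by rewrite -mulnA -expnD; apply: dvdn_mull; apply: dvdn_exp2l; lia.
exists t; split => //.
pose P := [set x : 'Z_(2 ^ v) | (nat_of_ord (red M x) < 2 ^ b)%N].
have redmu : forall x : 'Z_(2 ^ v), red M (mu q x) = red M x.
  by move=> x; rewrite /mu redM // red_nat // qZ mul1r.
have redrho : forall x : 'Z_(2 ^ v), red M (rho s t x) = red M x + (2 ^ b)%:R.
  by move=> x; rewrite /rho redM // redD // red_int // sZ mul1r red_nat.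
have flip : forall y : 'Z_M, (nat_of_ord (y + (2 ^ b)%:R)%R < 2 ^ b)%N = ~~ (nat_of_ord y < 2 ^ b)%N.
  move=> y.
  have ylt : (nat_of_ord y < M)%N by rewrite -[X in (_ < X)%N]Zp_cast ?ltn_ord.
  rewrite [y + _](_ : _ = ((nat_of_ord y) + 2 ^ b)%N%:R); last by rewrite natrD natr_Zp.
  rewrite (val_Zp_nat M1); move: (nat_of_ord y) ylt => k; rewrite /M expnS => kl.
  case: (ltnP k (2 ^ b)) => hk.
    by rewrite modn_small //=; lia.
  rewrite (_ : (k + 2 ^ b = (k - 2 ^ b) + 2 * 2 ^ b)%N); last by lia.
  by rewrite modnDr modn_small /=; lia.
have IM : [set rho s t x | x in P] = ~: P.
  apply/setP => y; rewrite inE; apply/imsetP/idP.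
    by move=> [x xP ->]; rewrite inE redrho flip negbK; rewrite inE in xP.
  move=> yP; exists ((s%:~R)^-1 * y - t).
    have ry : rho s t ((s%:~R)^-1 * y - t) = y by rewrite /rho subrK mulrA mulrV // mul1r.
    by rewrite inE in yP; rewrite -ry redrho flip in yP; rewrite inE; apply/negPn.
  by rewrite /rho subrK mulrA mulrV // mul1r.
exists P; split.
- apply/setP => y; apply/imsetP/idP.
    by move=> [x xP ->]; rewrite inE redmu; rewrite inE in xP.
  move=> yP; exists ((q%:R)^-1 * y); last by rewrite /mu mulrA mulrV // mul1r.
  by rewrite inE -redmu /mu mulrA mulrV // mul1r; rewrite inE in yP.
- by rewrite IM setUCr.
- by rewrite IM disjoints_subset setCK subxx.
Qed.

Unset Implicit Arguments.

Theorem lemma3p6 (q v : nat) (s : int) :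
  (exists p k : nat, [/\ prime p, (0 < k)%N & q = (p ^ k)%N]) ->
  odd q -> (0 < v)%N -> odd `|s|%N ->
  (exists t : 'Z_(2 ^ v), q%:R * t = t /\ typeI_duadic_exists q s t) <->
  (forall j : nat, nu2_sum_gt (q%:Z ^+ j - s) (q%:Z - 1) v).
Proof.
move=> [p [k [pp k0 ->]]] oq v0 os.
have q1 : (1 < p ^ k)%N.
  have p1 := prime_gt1 pp.
  by rewrite -(expn0 p) ltn_exp2l.
split.
  by move=> [t [qt ty]]; apply: (necessity q1 oq v0 os qt ty).
by move=> H; apply: sufficiency.
Qed.
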